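(* In the $\mathbf N$-agent system described in the context, let $\{\boldsymbol\mu_t^{\mathbf N},\boldsymbol\nu_t^{\mathbf N}\}_{t\ge0}$ be the empirical joint state and action distributions induced by a policy $\boldsymbol\pi=\{\boldsymbol\pi_t\}_{t\ge0}$. Then for every $t\ge0$, $$\mathbb E\Big|\frac1{N_{\mathrm{pop}}}\sum_{k\in[K]}\sum_{j=1}^{N_k}r_k(x_{j,k}^t,u_{j,k}^t,\boldsymbol\mu_t^{\mathbf N},\boldsymbol\nu_t^{\mathbf N})-\sum_{k\in[K]}r_k^{\mathrm{MF}}(\boldsymbol\mu_t^{\mathbf N},\boldsymbol\pi_t)\Big|\le C_R\sqrt{|\mathcal U|}\frac1{N_{\mathrm{pop}}}\Big(\sum_{k\in[K]}\sqrt{N_k}\Big),$$ where $C_R=M_R+L_R$.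
   Context: Fix $K\ge1$, $N_1,\dots,N_K\ge1$, $[K]=\{1,\dots,K\}$, $N_{\mathrm{pop}}=\sum_kN_k$, finite sets $\mathcal X,\mathcal U$, $\mathcal P(A)$ the probability distributions on $A$, $|\cdot|_1$ the $L_1$ norm, constants $M_R,L_R,L_P>0$. Agent $j\in[N_k]$ of class $k$ has state $x_{j,k}^t$ and action $u_{j,k}^t$; $\boldsymbol\mu_t^{\mathbf N}(x,k)=\frac1{N_{\mathrm{pop}}}\sum_{j=1}^{N_k}\mathbf 1(x_{j,k}^t=x)$, $\boldsymbol\nu_t^{\mathbf N}(u,k)=\frac1{N_{\mathrm{pop}}}\sum_{j=1}^{N_k}\mathbf 1(u_{j,k}^t=u)$. For each $k$, $r_k:\mathcal X\times\mathcal U\times\mathcal P(\mathcal X\times[K])\times\mathcal P(\mathcal U\times[K])\to\mathbb R$ and $P_k:\mathcal X\times\mathcal U\times\mathcal P(\mathcal X\times[K])\times\mathcal P(\mathcal U\times[K])\to\mathcal P(\mathcal X)$ satisfy $|r_k|\le M_R$, $|r_k(x,u,\boldsymbol\mu_1,\boldsymbol\nu_1)-r_k(x,u,\boldsymbol\mu_2,\boldsymbol\nu_2)|\le L_R(|\boldsymbol\mu_1-\boldsymbol\mu_2|_1+|\boldsymbol\nu_1-\boldsymbol\nu_2|_1)$, $|P_k(x,u,\boldsymbol\mu_1,\boldsymbol\nu_1)-P_k(x,u,\boldsymbol\mu_2,\boldsymbol\nu_2)|_1\le L_P(|\boldsymbol\mu_1-\boldsymbol\mu_2|_1+|\boldsymbol\nu_1-\boldsymbol\nu_2|_1)$.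 A policy is $\boldsymbol\pi=\{\boldsymbol\pi_t\}_{t\ge0}$, $\boldsymbol\pi_t=(\pi_k^t)_k$, $\pi_k^t:\mathcal X\times\mathcal P(\mathcal X\times[K])\to\mathcal P(\mathcal U)$. Dynamics: conditioned on all states at time $t$, actions are independent across agents with $u_{j,k}^t\sim\pi_k^t(x_{j,k}^t,\boldsymbol\mu_t^{\mathbf N})$; conditioned on states and actions, next states are independent with $x_{j,k}^{t+1}\sim P_k(x_{j,k}^t,u_{j,k}^t,\boldsymbol\mu_t^{\mathbf N},\boldsymbol\nu_t^{\mathbf N})$. Mean-field: $\nu^{\mathrm{MF}}(\boldsymbol\mu,\boldsymbol\pi)(u,k)=\sum_x\pi_k(x,\boldsymbol\mu)(u)\boldsymbol\mu(x,k)$, $r_k^{\mathrm{MF}}(\boldsymbol\mu,\boldsymbol\pi)=\sum_{x,u}\boldsymbol\mu(x,k)\pi_k(x,\boldsymbol\mu)(u)r_k(x,u,\boldsymbol\mu,\nu^{\mathrm{MF}}(\boldsymbol\mu,\boldsymbol\pi))$. *)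

(* Defs.v *)
From mathcomp Require Import all_boot all_order all_algebra.
From mathcomp Require Import reals.
Set Implicit Arguments. Unset Strict Implicit. Unset Printing Implicit Defensive.
Import Order.TTheory GRing.Theory Num.Theory.
Local Open Scope ring_scope.

Definition is_pdist (R : realType) (T : finType) (f : {ffun T -> R}) : Prop :=
  (forall i, 0 <= f i) /\ \sum_i f i = 1.

Definition l1dist (R : realType) (T : finType) (f g : {ffun T -> R}) : R :=
  \sum_i `|f i - g i|.

Definition agent (K : nat) (N : 'I_K -> nat) : finType := {k : 'I_K & 'I_(N k)}.

Definition Npop (K : nat) (N : 'I_K -> nat) : nat := (\sum_(k < K) N k)%N.

Definition emp_mu (R : realType) (X : finType) (K : nat) (N : 'I_K -> nat)
  (xs : {ffun agent N -> X}) : {ffun X * 'I_K -> R} :=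
  [ffun p => (\sum_(a : agent N | (tag a == p.2) && (xs a == p.1)) 1)
             / (Npop N)%:R].

Definition emp_nu (R : realType) (U : finType) (K : nat) (N : 'I_K -> nat)
  (us : {ffun agent N -> U}) : {ffun U * 'I_K -> R} :=
  [ffun p => (\sum_(a : agent N | (tag a == p.2) && (us a == p.1)) 1)
             / (Npop N)%:R].

Definition nuMF (R : realType) (X U : finType) (K : nat)
  (pit : 'I_K -> X -> {ffun X * 'I_K -> R} -> {ffun U -> R})
  (mu : {ffun X * 'I_K -> R}) : {ffun U * 'I_K -> R} :=
  [ffun p => \sum_x pit p.2 x mu p.1 * mu (x, p.2)].

Definition rMF (R : realType) (X U : finType) (K : nat)
  (r : 'I_K -> X -> U -> {ffun X * 'I_K -> R} -> {ffun U * 'I_K -> R} -> R)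
  (pit : 'I_K -> X -> {ffun X * 'I_K -> R} -> {ffun U -> R})
  (mu : {ffun X * 'I_K -> R}) (k : 'I_K) : R :=
  \sum_x \sum_u mu (x, k) * pit k x mu u * r k x u mu (nuMF pit mu).

Definition act_prob (R : realType) (X U : finType) (K : nat) (N : 'I_K -> nat)
  (pit : 'I_K -> X -> {ffun X * 'I_K -> R} -> {ffun U -> R})
  (xs : {ffun agent N -> X}) (us : {ffun agent N -> U}) : R :=
  \prod_(a : agent N) pit (tag a) (xs a) (emp_mu R xs) (us a).

Definition trans_prob (R : realType) (X U : finType) (K : nat) (N : 'I_K -> nat)
  (P : 'I_K -> X -> U -> {ffun X * 'I_K -> R} -> {ffun U * 'I_K -> R} -> {ffun X -> R})
  (xs : {ffun agent N -> X}) (us : {ffun agent N -> U}) (xs' : {ffun agent N -> X}) : R :=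
  \prod_(a : agent N) P (tag a) (xs a) (us a) (emp_mu R xs) (emp_nu R us) (xs' a).

Fixpoint state_law (R : realType) (X U : finType) (K : nat) (N : 'I_K -> nat)
  (P : 'I_K -> X -> U -> {ffun X * 'I_K -> R} -> {ffun U * 'I_K -> R} -> {ffun X -> R})
  (pi : nat -> 'I_K -> X -> {ffun X * 'I_K -> R} -> {ffun U -> R})
  (init : {ffun {ffun agent N -> X} -> R}) (t : nat) : {ffun {ffun agent N -> X} -> R} :=
  match t with
  | 0 => init
  | t'.+1 =>
      let L := state_law P pi init t' in
      [ffun xs' => \sum_(xs : {ffun agent N -> X}) \sum_(us : {ffun agent N -> U})
          L xs * act_prob (pi t') xs us * trans_prob P xs us xs']
  end.

Definition expect_t (R : realType) (X U : finType) (K : nat) (N : 'I_K -> nat)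
  (P : 'I_K -> X -> U -> {ffun X * 'I_K -> R} -> {ffun U * 'I_K -> R} -> {ffun X -> R})
  (pi : nat -> 'I_K -> X -> {ffun X * 'I_K -> R} -> {ffun U -> R})
  (init : {ffun {ffun agent N -> X} -> R}) (t : nat)
  (F : {ffun agent N -> X} -> {ffun agent N -> U} -> R) : R :=
  \sum_(xs : {ffun agent N -> X}) \sum_(us : {ffun agent N -> U})
     state_law P pi init t xs * act_prob (pi t) xs us * F xs us.

(* Main.v *)
Require Import Defs.
From mathcomp Require Import all_boot all_order all_algebra.
From mathcomp Require Import reals.
From mathcomp Require Import ring lra.
Import Order.TTheory GRing.Theory Num.Theory.
Set Implicit Arguments. Unset Strict Implicit. Unset Printing Implicit Defensive.
Local Open Scope ring_scope.

Section Gen.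
Variable R : realType.

Lemma jensen_abs (I : finType) (Q Z : I -> R) (B : R) :
  (forall i, 0 <= Q i) -> \sum_i Q i = 1 -> 0 <= B ->
  \sum_i Q i * Z i ^+ 2 <= B ^+ 2 -> \sum_i Q i * `|Z i| <= B.
Proof.
move=> Q0 Q1 B0 H.
set m := \sum_i Q i * `|Z i|.
have m0 : 0 <= m by apply: sumr_ge0 => i _; rewrite mulr_ge0.
have : 0 <= \sum_i Q i * (`|Z i| - m) ^+ 2.
  by apply: sumr_ge0 => i _; rewrite mulr_ge0 // sqr_ge0.
have -> : \sum_i Q i * (`|Z i| - m) ^+ 2 =
   \sum_i Q i * Z i ^+ 2 - m ^+ 2.
  have -> : \sum_i Q i * (`|Z i| - m) ^+ 2 =
     \sum_i (Q i * Z i ^+ 2 - (2 * m) * (Q i * `|Z i|) + m ^+ 2 * Q i).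
    by apply: eq_bigr => i _; rewrite -[Z i ^+ 2](real_normK (num_real (Z i))); ring.
  rewrite !big_split /= sumrN -!mulr_sumr Q1 -/m; ring.
rewrite subr_ge0 => hm.
rewrite -(ler_sqr (x:=m)) ?nnegrE //.
exact: le_trans hm H.
Qed.

Lemma prod_sum (A U : finType) (f : A -> U -> R) :
  \sum_(us : {ffun A -> U}) \prod_a f a (us a) = \prod_a \sum_u f a u.
Proof. by rewrite bigA_distr_bigA. Qed.

Lemma prod_pick (A : finType) (a : A) (F : A -> R) :
  \prod_c (if c == a then F c else 1) = F a.
Proof. by rewrite -big_mkcond big_pred1_eq. Qed.

Lemma second_moment (A U : finType) (p g : A -> U -> R) :
  (forall a, \sum_u p a u = 1) ->
  (forall a, \sum_u p a u * g a u = 0) ->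
  \sum_(us : {ffun A -> U}) (\prod_a p a (us a)) * (\sum_a g a (us a)) ^+ 2
  = \sum_a \sum_u p a u * g a u ^+ 2.
Proof.
move=> p1 g0.
have E : forall us : {ffun A -> U}, (\sum_a g a (us a)) ^+ 2 =
   \sum_a \sum_b g a (us a) * g b (us b).
  by move=> us; rewrite expr2 big_distrl /=; apply: eq_bigr => a _; rewrite big_distrr.
under eq_bigr do rewrite E big_distrr /= ; rewrite exchange_big /=.
apply: eq_bigr => a _.
under eq_bigr do rewrite big_distrr /=; rewrite exchange_big /=.
rewrite (bigD1 a) //= [X in _ + X]big1 ?addr0.
  have -> : \sum_u p a u * g a u ^+ 2 =
     \prod_c \sum_u p c u * (if c == a then g c u ^+ 2 else 1).
    rewrite -(prod_pick a (fun c => \sum_u p c u * g c u ^+ 2)).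
    apply: eq_bigr => c _; case: eqP => [->|_] //.
    by under eq_bigr do rewrite mulr1; rewrite p1.
  rewrite -prod_sum; apply: eq_bigr => us _.
  by rewrite big_split /= prod_pick expr2.
move=> b nba.
transitivity (\prod_c \sum_u p c u *
    ((if c == a then g c u else 1) * (if c == b then g c u else 1))); last first.
  have nab : (a == b) = false by rewrite eq_sym (negbTE nba).
  rewrite (bigD1 a) //= eqxx nab.
  by under eq_bigr do rewrite mulr1; rewrite g0 mul0r.
rewrite -prod_sum; apply: eq_bigr => us _.
by rewrite big_split /= big_split /= !prod_pick.
Qed.


Lemma sum_sqrt_le (I : finType) (s : I -> R) :
  (forall i, 0 <= s i) ->
  \sum_i Num.sqrt (s i) <= Num.sqrt (#|I|%:R) * Num.sqrt (\sum_i s i).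
Proof.
move=> s0.
have S0 : 0 <= \sum_i s i by apply: sumr_ge0.
case: (posnP #|I|) => [c0|cpos].
  rewrite big1 ?mulr_ge0 ?sqrtr_ge0 // => i _.
  by move: (card0_eq c0 i); rewrite inE.
set c : R := #|I|%:R.
have cp : 0 < c by rewrite /c ltr0n.
have H := @jensen_abs I (fun=> c^-1) (fun i => Num.sqrt (s i))
   (Num.sqrt (c^-1 * \sum_i s i)).
have ci : 0 <= c^-1 by rewrite invr_ge0 ltW.
have := H (fun=> ci).
rewrite sumr_const -mulr_natr mulVf ?gt_eqF // => /(_ erefl (sqrtr_ge0 _)).
rewrite sqr_sqrtr; last by rewrite mulr_ge0.
rewrite -mulr_sumr.
under eq_bigr do rewrite sqr_sqrtr //.
move=> /(_ (lexx _)).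
under eq_bigr do rewrite ger0_norm ?sqrtr_ge0 //.
rewrite -mulr_sumr => h.
have -> : \sum_i Num.sqrt (s i) = c * (c^-1 * \sum_i Num.sqrt (s i)).
  by rewrite mulrA mulfV ?gt_eqF // mul1r.
apply: le_trans (ler_wpM2l (ltW cp) h) _.
rewrite sqrtrM //.
rewrite -{1}(sqr_sqrtr (ltW cp)) expr2 -!mulrA.
rewrite (mulrA (Num.sqrt c) (Num.sqrt c^-1)) -sqrtrM; last exact: ltW cp.
by rewrite mulfV ?gt_eqF // sqrtr1 mul1r.
Qed.

End Gen.


Section Model.
Variables (R : realType) (X : finType) (K : nat) (N : 'I_K -> nat).

Lemma sum_tag_k k (j0 : 'I_(N k)) (F : agent N -> R) :
  \sum_(a : agent N | tag a == k) F a = \sum_(j : 'I_(N k)) F (Tagged (fun k => 'I_(N k)) j).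
Proof.
rewrite (reindex_onto (fun j : 'I_(N k) => Tagged (fun k => 'I_(N k)) j)
   (fun a : agent N => tagged_as (Tagged (fun k => 'I_(N k)) j0) a)).
  by apply: eq_bigl => j /=; rewrite eqxx tagged_asE eqxx.
case=> k' j /= /eqP e; subst k'.
by rewrite tagged_asE.
Qed.

Lemma sum_by_tag (F : agent N -> R) :
  \sum_(a : agent N) F a = \sum_k \sum_(a : agent N | tag a == k) F a.
Proof. by rewrite (partition_big (fun a : agent N => tag a) predT). Qed.

Hypothesis Npos : forall k, (0 < N k)%N.

Lemma count_tag k : \sum_(a : agent N | tag a == k) (1 : R) = (N k)%:R.
Proof.
rewrite (sum_tag_k (Ordinal (Npos k))) sumr_const card_ord //.
Qed.

Lemma count_all : \sum_(a : agent N) (1 : R) = (Npop N)%:R.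
Proof.
rewrite sum_by_tag /Npop natr_sum; apply: eq_bigr => k _; exact: count_tag.
Qed.

Lemma regroup (Y : 'I_K -> X -> R) (xs : {ffun agent N -> X}) k :
  \sum_x emp_mu R xs (x, k) * Y k x =
  (Npop N)%:R^-1 * \sum_(a : agent N | tag a == k) Y (tag a) (xs a).
Proof.
under eq_bigr do rewrite ffunE /= mulrAC mulr_suml.
rewrite -mulr_suml mulrC; congr (_ * _).
under eq_bigr do rewrite big_mkcondr.
under eq_bigr do under eq_bigr do rewrite mul1r.
rewrite exchange_big /=; apply: eq_bigr => a /eqP ->.
rewrite -big_mkcond /=.
by under eq_bigl do rewrite eq_sym; rewrite big_pred1_eq.
Qed.

Lemma Npop_gt0 : (0 < K)%N -> 0 < (Npop N)%:R :> R.
Proof.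
move=> K0; rewrite ltr0n /Npop (bigD1 (Ordinal K0)) //=.
by rewrite (leq_trans (Npos (Ordinal K0))) // leq_addr.
Qed.

Hypothesis K0 : (0 < K)%N.

Lemma sum_pair (V : finType) (F : V * 'I_K -> R) :
  \sum_(p : V * 'I_K) F p = \sum_k \sum_v F (v, k).
Proof.
rewrite exchange_big pair_bigA /=; apply: eq_bigr => -[v k] //.
Qed.

Lemma emp_mu_pdist (xs : {ffun agent N -> X}) : is_pdist (emp_mu R xs).
Proof.
split.
  move=> p; rewrite ffunE divr_ge0 ?sumr_ge0 //.
rewrite sum_pair.
have n0 := Npop_gt0 K0.
transitivity (\sum_k (Npop N)%:R^-1 * \sum_(a : agent N | tag a == k) (fun _ _ => 1 : R) (tag a) (xs a)).
  apply: eq_bigr => k _; rewrite -(regroup (fun _ _ => 1) xs).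
  by apply: eq_bigr => x _; rewrite mulr1.
rewrite -mulr_sumr -sum_by_tag count_all mulVf //.
by rewrite gt_eqF.
Qed.

End Model.

Section Model2.
Variables (R : realType) (X : finType) (K : nat) (N : 'I_K -> nat).
Hypothesis Npos : forall k, (0 < N k)%N.
Hypothesis K0 : (0 < K)%N.
Let emp_mu_pdist V := @emp_mu_pdist R V K N Npos K0.
Let regroup := @regroup R X K N.
Let sum_by_tag := @sum_by_tag R K N.
Let sum_pair := @sum_pair R K.

Lemma nuMF_formula (U : finType) (pit : 'I_K -> X -> {ffun X * 'I_K -> R} -> {ffun U -> R})
  (xs : {ffun agent N -> X}) u k :
  nuMF pit (emp_mu R xs) (u, k) =
  (Npop N)%:R^-1 * \sum_(a : agent N | tag a == k) pit (tag a) (xs a) (emp_mu R xs) u.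
Proof.
rewrite ffunE /=.
under eq_bigr do rewrite mulrC.
rewrite (regroup (fun k x => pit k x (emp_mu R xs) u)) //.
Qed.

Lemma rMF_sum (U : finType)
  (r : 'I_K -> X -> U -> {ffun X * 'I_K -> R} -> {ffun U * 'I_K -> R} -> R)
  (pit : 'I_K -> X -> {ffun X * 'I_K -> R} -> {ffun U -> R})
  (xs : {ffun agent N -> X}) :
  \sum_k rMF r pit (emp_mu R xs) k =
  (Npop N)%:R^-1 * \sum_(a : agent N) \sum_u pit (tag a) (xs a) (emp_mu R xs) u *
      r (tag a) (xs a) u (emp_mu R xs) (nuMF pit (emp_mu R xs)).
Proof.
rewrite sum_by_tag mulr_sumr; apply: eq_bigr => k _.
rewrite /rMF.
under eq_bigr do under eq_bigr do rewrite -mulrA.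
under eq_bigr do rewrite -mulr_sumr.
by rewrite (regroup (fun k x => \sum_u pit k x (emp_mu R xs) u *
      r k x u (emp_mu R xs) (nuMF pit (emp_mu R xs)))).
Qed.

Lemma nuMF_pdist (U : finType) (pit : 'I_K -> X -> {ffun X * 'I_K -> R} -> {ffun U -> R}) mu :
  is_pdist mu -> (forall k x, is_pdist (pit k x mu)) -> is_pdist (nuMF pit mu).
Proof.
move=> [m0 m1] hp; split.
  move=> p; rewrite ffunE sumr_ge0 // => x _.
  by rewrite mulr_ge0 //; case: (hp p.2 x).
rewrite sum_pair -m1 sum_pair; apply: eq_bigr => k _.
under eq_bigr do rewrite ffunE /=.
rewrite exchange_big /=; apply: eq_bigr => x _.
by rewrite -mulr_suml; case: (hp k x) => _ ->; rewrite mul1r.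
Qed.

Lemma prod_pdist_sum (U : finType) (p : agent N -> {ffun U -> R}) :
  (forall a, is_pdist (p a)) ->
  \sum_(us : {ffun agent N -> U}) \prod_a p a (us a) = 1.
Proof.
move=> hp; rewrite -(bigA_distr_bigA (fun a u => p a u)) /= big1 // => a _; by case: (hp a).
Qed.

Lemma prod_pdist_ge0 (U : finType) (p : agent N -> {ffun U -> R}) (us : {ffun agent N -> U}) :
  (forall a, is_pdist (p a)) -> 0 <= \prod_a p a (us a).
Proof. by move=> hp; apply: prodr_ge0 => a _; case: (hp a). Qed.

Lemma state_law_pdist (U : finType)
  (P : 'I_K -> X -> U -> {ffun X * 'I_K -> R} -> {ffun U * 'I_K -> R} -> {ffun X -> R})
  (pi : nat -> 'I_K -> X -> {ffun X * 'I_K -> R} -> {ffun U -> R})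
  (init : {ffun {ffun agent N -> X} -> R}) :
  (forall k x u mu nu, is_pdist mu -> is_pdist nu -> is_pdist (P k x u mu nu)) ->
  (forall t k x mu, is_pdist mu -> is_pdist (pi t k x mu)) ->
  is_pdist init -> forall t, is_pdist (state_law P pi init t).
Proof.
move=> hP hpi hinit; elim=> [//|t [L0 L1]] /=.
have hA : forall xs : {ffun agent N -> X}, forall a : agent N, is_pdist (pi t (tag a) (xs a) (emp_mu R xs)).
  by move=> xs a; apply: hpi; exact: (emp_mu_pdist xs).
have hT : forall (xs : {ffun agent N -> X}) (us : {ffun agent N -> U}) (a : agent N),
    is_pdist (P (tag a) (xs a) (us a) (emp_mu R xs) (emp_nu R us)).
  move=> xs us a; apply: hP; first exact: (emp_mu_pdist xs).
  exact: (emp_mu_pdist us).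
split.
  move=> xs'; rewrite ffunE; apply: sumr_ge0 => xs _; apply: sumr_ge0 => us _.
  rewrite mulr_ge0 ?mulr_ge0 //; first exact: (prod_pdist_ge0 us (hA xs)).
  exact: (prod_pdist_ge0 xs' (hT xs us)).
under eq_bigr do rewrite ffunE.
rewrite exchange_big /= -L1; apply: eq_bigr => xs _.
rewrite exchange_big /=.
rewrite -[RHS]mulr1 -(prod_pdist_sum (hA xs)) mulr_sumr.
apply: eq_bigr => us _.
by rewrite -mulr_sumr /trans_prob (prod_pdist_sum (hT xs us)) mulr1.
Qed.

End Model2.


Section Small.
Variable R : realType.

Lemma sum_ind (V : finType) (p : V -> R) u :
  \sum_v p v * (v == u)%:R = p u.
Proof.
rewrite (bigD1 u) //= eqxx mulr1 big1 ?addr0 // => v /negbTE ->.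
by rewrite mulr0.
Qed.

Lemma var_ind (V : finType) (p : V -> R) u :
  \sum_v p v = 1 -> (forall v, 0 <= p v) ->
  \sum_v p v * ((v == u)%:R - p u) ^+ 2 <= p u.
Proof.
move=> p1 p0.
have E : forall v, p v * ((v == u)%:R - p u) ^+ 2 =
   p v * (v == u)%:R * (1 - 2 * p u) + p u ^+ 2 * p v.
  by move=> v; case: (v == u) => /=; ring.
under eq_bigr do rewrite E.
rewrite big_split /= -mulr_suml -mulr_sumr sum_ind p1.
have : 0 <= p u ^+ 2 by rewrite sqr_ge0.
lra.
Qed.

Lemma var_le (V : finType) (p f : V -> R) (M : R) :
  \sum_v p v = 1 -> (forall v, 0 <= p v) -> (forall v, `|f v| <= M) ->
  \sum_v p v * (f v - \sum_w p w * f w) ^+ 2 <= M ^+ 2.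
Proof.
move=> p1 p0 fM.
set m := \sum_w p w * f w.
have E : forall v, p v * (f v - m) ^+ 2 =
   p v * f v ^+ 2 - (2 * m) * (p v * f v) + m ^+ 2 * p v.
  by move=> v; ring.
under eq_bigr do rewrite E.
rewrite !big_split /= sumrN -!mulr_sumr p1 -/m.
have : \sum_v p v * f v ^+ 2 <= M ^+ 2.
  rewrite -[M ^+ 2]mul1r -p1 mulr_suml; apply: ler_sum => v _.
  apply: ler_wpM2l => //.
  rewrite -real_normK ?num_real // ler_sqr ?nnegrE //.
  exact: le_trans (normr_ge0 _) (fM v).
have : 0 <= m ^+ 2 by rewrite sqr_ge0.
lra.
Qed.

Lemma center (V : finType) (p f : V -> R) :
  \sum_v p v = 1 -> \sum_v p v * (f v - \sum_w p w * f w) = 0.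
Proof.
move=> p1; under eq_bigr do rewrite mulrBr.
by rewrite sumrB -mulr_suml p1 mul1r subrr.
Qed.

Lemma center_ind (V : finType) (p : V -> R) u :
  \sum_v p v = 1 -> \sum_v p v * ((v == u)%:R - p u) = 0.
Proof.
move=> p1; under eq_bigr do rewrite mulrBr.
by rewrite sumrB sum_ind -mulr_suml p1 mul1r subrr.
Qed.

Lemma sqr_sum_ge (I : finType) (s : I -> R) :
  (forall i, 0 <= s i) -> \sum_i s i <= (\sum_i Num.sqrt (s i)) ^+ 2.
Proof.
move=> s0; rewrite expr2 mulr_suml; apply: ler_sum => i _.
rewrite -{1}(sqr_sqrtr (s0 i)) expr2 ler_wpM2l ?sqrtr_ge0 //.
rewrite (bigD1 i) //= lerDl sumr_ge0 // => j _; exact: sqrtr_ge0.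
Qed.

End Small.


Section Cond.
Variables (R : realType) (X U : finType) (K : nat) (N : 'I_K -> nat).
Hypothesis Npos : forall k, (0 < N k)%N.
Hypothesis K0 : (0 < K)%N.
Variables (M L : R)
  (r : 'I_K -> X -> U -> {ffun X * 'I_K -> R} -> {ffun U * 'I_K -> R} -> R)
  (pit : 'I_K -> X -> {ffun X * 'I_K -> R} -> {ffun U -> R}).
Hypothesis U0 : (0 < #|U|)%N.
Hypothesis M0 : 0 <= M.
Hypothesis L0 : 0 <= L.
Hypothesis rM : forall k x u mu nu, is_pdist mu -> is_pdist nu -> `|r k x u mu nu| <= M.
Hypothesis rL : forall k x u mu1 nu1 mu2 nu2,
     is_pdist mu1 -> is_pdist nu1 -> is_pdist mu2 -> is_pdist nu2 ->
     `|r k x u mu1 nu1 - r k x u mu2 nu2| <= L * (l1dist mu1 mu2 + l1dist nu1 nu2).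
Hypothesis hpi : forall k x mu, is_pdist mu -> is_pdist (pit k x mu).
Variable xs : {ffun agent N -> X}.

Let n : R := (Npop N)%:R.
Let S : R := \sum_k Num.sqrt ((N k)%:R).
Let mu := emp_mu R xs.
Let nm := nuMF pit mu.
Let p := fun (a : agent N) u => pit (tag a) (xs a) mu u.
Let Q := fun (us : {ffun agent N -> U}) => act_prob pit xs us.

Let n0 : 0 < n. Proof. exact: (Npop_gt0 R Npos K0). Qed.
Let mupd : is_pdist mu. Proof. exact: (emp_mu_pdist R Npos K0 xs). Qed.
Let nupd (us : {ffun agent N -> U}) : is_pdist (emp_nu R us). Proof. exact: (emp_mu_pdist R Npos K0 us). Qed.
Let nmpd : is_pdist nm. Proof. by apply: nuMF_pdist => // k x; apply: hpi. Qed.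
Let ppd a : is_pdist (pit (tag a) (xs a) mu). Proof. exact: hpi. Qed.
Let p1 a : \sum_u p a u = 1. Proof. by case: (ppd a). Qed.
Let p0 a u : 0 <= p a u. Proof. by case: (ppd a) => H _; exact: H. Qed.
Let Q0 (us : {ffun agent N -> U}) : 0 <= Q us. Proof. exact: prod_pdist_ge0. Qed.
Let Q1 : \sum_(us : {ffun agent N -> U}) Q us = 1. Proof. exact: prod_pdist_sum. Qed.

Let S0 : 0 <= S. Proof. by rewrite /S sumr_ge0 // => k _; exact: sqrtr_ge0. Qed.
Let ni0 : 0 <= n^-1. Proof. by rewrite invr_ge0 ltW. Qed.

Let h := fun a v => r (tag a) (xs a) v mu nm - \sum_u p a u * r (tag a) (xs a) u mu nm.

Lemma stepA (us : {ffun agent N -> U}) :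
  `| n^-1 * \sum_(a : agent N) r (tag a) (xs a) (us a) mu (emp_nu R us)
      - \sum_(k < K) rMF r pit mu k |
  <= L * l1dist (emp_nu R us) nm + `| n^-1 * \sum_a h a (us a) |.
Proof.
rewrite (rMF_sum r pit xs) -/mu -/nm.
have E : n^-1 * \sum_(a : agent N) r (tag a) (xs a) (us a) mu (emp_nu R us) -
  n^-1 * \sum_(a : agent N) \sum_u pit (tag a) (xs a) mu u * r (tag a) (xs a) u mu nm =
  n^-1 * \sum_(a : agent N) (r (tag a) (xs a) (us a) mu (emp_nu R us) - r (tag a) (xs a) (us a) mu nm)
  + n^-1 * \sum_a h a (us a).
  rewrite -mulrBr -mulrDr -sumrB -big_split /=; congr (_ * _).
  by apply: eq_bigr => a _; rewrite /h /p; ring.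
rewrite E; apply: le_trans (ler_normD _ _) _; apply: lerD => //.
rewrite normrM ger0_norm //.
have l0 : l1dist mu mu = 0.
  by rewrite /l1dist big1 // => i _; rewrite subrr normr0.
have Sc : forall c : R, \sum_(a : agent N) c = c * n.
  by move=> c; rewrite /n -(count_all R Npos) mulr_sumr; apply: eq_bigr => a _; rewrite mulr1.
apply: le_trans (_ : n^-1 * \sum_(a : agent N) (L * (l1dist mu mu + l1dist (emp_nu R us) nm)) <= _).
  apply: ler_wpM2l => //; apply: le_trans (ler_norm_sum _ _ _) _.
  by apply: ler_sum => a _; apply: rL.
by rewrite Sc l0 add0r mulrCA mulVf ?gt_eqF // mulr1.
Qed.

Lemma stepB : \sum_(us : {ffun agent N -> U}) Q us * l1dist (emp_nu R us) nm <= Num.sqrt (#|U|%:R) * n^-1 * S.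
Proof.
pose s u k := \sum_(a : agent N | tag a == k) p a u.
have s0 : forall u k, 0 <= s u k by move=> u k; apply: sumr_ge0.
pose g u k (a : agent N) v := if tag a == k then (v == u)%:R - p a u else 0.
rewrite /l1dist.
under eq_bigr do rewrite mulr_sumr.
rewrite exchange_big /= sum_pair.
apply: le_trans (_ : \sum_k \sum_u n^-1 * Num.sqrt (s u k) <= _).
  apply: ler_sum => k _; apply: ler_sum => u _.
  have D : forall us : {ffun agent N -> U},
      emp_nu R us (u, k) - nm (u, k) = n^-1 * \sum_a g u k a (us a).
    move=> us; rewrite /nm (nuMF_formula pit xs u k) -/mu ffunE /=.
    have -> : \sum_(a : agent N | (tag a == k) && (us a == u)) (1 : R) =
              \sum_(a : agent N | tag a == k) (us a == u)%:R.
      by rewrite big_mkcondr; apply: eq_bigr => a _; case: (us a == u).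
    rewrite mulrC -/n -mulrBr -sumrB big_mkcond /=; congr (_ * _).
  under eq_bigr do rewrite D.
  apply: jensen_abs => //; first by rewrite mulr_ge0 ?sqrtr_ge0.
  have hc : forall a, \sum_v p a v * g u k a v = 0.
    move=> a; rewrite /g; case: (tag a == k); first exact: center_ind.
    by rewrite big1 // => v _; rewrite mulr0.
  under eq_bigr do rewrite exprMn mulrCA.
  rewrite -mulr_sumr (second_moment p1 hc) exprMn sqr_sqrtr //.
  apply: ler_wpM2l; first exact: sqr_ge0.
  rewrite /s [X in _ <= X]big_mkcond /=; apply: ler_sum => a _.
  rewrite /g; case: (tag a == k); first by apply: var_ind.
  by rewrite big1 // => v _; rewrite expr0n mulr0.
rewrite /S mulr_sumr; apply: ler_sum => k _; rewrite -mulr_sumr.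
rewrite [Num.sqrt _ * n^-1]mulrC -mulrA; apply: ler_wpM2l => //.
apply: le_trans (sum_sqrt_le (fun u => s0 u k)) _.
have -> : \sum_u s u k = (N k)%:R.
  rewrite /s exchange_big /= -(count_tag R Npos k); apply: eq_bigr => a _; exact: p1.
by [].
Qed.

Lemma stepC : \sum_(us : {ffun agent N -> U}) Q us * `| n^-1 * \sum_a h a (us a) | <= M * Num.sqrt (#|U|%:R) * n^-1 * S.
Proof.
have u1 : 1 <= #|U|%:R :> R by rewrite ler1n.
apply: jensen_abs => //; first by rewrite !mulr_ge0 ?sqrtr_ge0.
have hc : forall a, \sum_u p a u * h a u = 0.
  move=> a; rewrite /h; exact: (center (fun v => r (tag a) (xs a) v mu nm) (p1 a)).
have hv : forall a, \sum_u p a u * h a u ^+ 2 <= M ^+ 2.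
  move=> a; rewrite /h; apply: var_le => //.
  by move=> v; apply: rM.
under eq_bigr do rewrite exprMn mulrCA.
rewrite -mulr_sumr.
rewrite (second_moment p1 hc).
have Sn : n <= S ^+ 2.
  rewrite /n /S /Npop natr_sum; apply: sqr_sum_ge => k; exact: ler0n.
have Sc : forall c : R, \sum_(a : agent N) c = c * n.
  by move=> c; rewrite /n -(count_all R Npos) mulr_sumr; apply: eq_bigr => a _; rewrite mulr1.
apply: le_trans (_ : n^-1 ^+ 2 * (M ^+ 2 * n) <= _).
  by rewrite -Sc; apply: ler_wpM2l; [exact: sqr_ge0 | apply: ler_sum => a _; exact: hv].
rewrite !exprMn sqr_sqrtr ?ler0n //.
have h1 : n <= #|U|%:R * S ^+ 2.
  apply: le_trans Sn _; rewrite ler_peMl //; exact: sqr_ge0.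
have a0 : 0 <= n^-1 ^+ 2 * M ^+ 2 by rewrite mulr_ge0 // sqr_ge0.
have -> : n^-1 ^+ 2 * (M ^+ 2 * n) = n^-1 ^+ 2 * M ^+ 2 * n by ring.
have -> : M ^+ 2 * #|U|%:R * n^-1 ^+ 2 * S ^+ 2 = n^-1 ^+ 2 * M ^+ 2 * (#|U|%:R * S ^+ 2) by ring.
by apply: ler_wpM2l.
Qed.

Lemma cond_bound :
  \sum_(us : {ffun agent N -> U}) act_prob pit xs us *
    `| n^-1 * \sum_(a : agent N) r (tag a) (xs a) (us a) (emp_mu R xs) (emp_nu R us)
      - \sum_(k < K) rMF r pit (emp_mu R xs) k |
  <= (M + L) * Num.sqrt (#|U|%:R) * n^-1 * S.
Proof.
apply: le_trans (_ : \sum_(us : {ffun agent N -> U}) Q us * (L * l1dist (emp_nu R us) nm + `| n^-1 * \sum_a h a (us a) |) <= _).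
  by apply: ler_sum => us _; apply: ler_wpM2l; [exact: Q0 | exact: stepA].
under eq_bigr do rewrite mulrDr mulrCA.
rewrite big_split /= -mulr_sumr.
have := stepB; have := stepC.
have : 0 <= Num.sqrt (#|U|%:R) * n^-1 * S.
  by rewrite !mulr_ge0 ?sqrtr_ge0.
move=> c0 hC hB.
have -> : (M + L) * Num.sqrt #|U|%:R * n^-1 * S = M * Num.sqrt #|U|%:R * n^-1 * S + L * (Num.sqrt #|U|%:R * n^-1 * S) by ring.
rewrite [X in _ <= X]addrC; apply: lerD => //; exact: ler_wpM2l.
Qed.

End Cond.


Unset Implicit Arguments. Set Strict Implicit.

Theorem lemma7 (R : realType) (X U : finType) (K : nat) (N : 'I_K -> nat)
  (M_R L_R L_P : R)
  (r : 'I_K -> X -> U -> {ffun X * 'I_K -> R} -> {ffun U * 'I_K -> R} -> R)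
  (P : 'I_K -> X -> U -> {ffun X * 'I_K -> R} -> {ffun U * 'I_K -> R} -> {ffun X -> R})
  (pi : nat -> 'I_K -> X -> {ffun X * 'I_K -> R} -> {ffun U -> R})
  (init : {ffun {ffun agent N -> X} -> R}) :
  (0 < K)%N ->
  (forall k, (0 < N k)%N) ->
  0 < M_R -> 0 < L_R -> 0 < L_P ->
  (forall k x u mu nu, is_pdist mu -> is_pdist nu -> `|r k x u mu nu| <= M_R) ->
  (forall k x u mu1 nu1 mu2 nu2,
     is_pdist mu1 -> is_pdist nu1 -> is_pdist mu2 -> is_pdist nu2 ->
     `|r k x u mu1 nu1 - r k x u mu2 nu2| <= L_R * (l1dist mu1 mu2 + l1dist nu1 nu2)) ->
  (forall k x u mu nu, is_pdist mu -> is_pdist nu -> is_pdist (P k x u mu nu)) ->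
  (forall k x u mu1 nu1 mu2 nu2,
     is_pdist mu1 -> is_pdist nu1 -> is_pdist mu2 -> is_pdist nu2 ->
     l1dist (P k x u mu1 nu1) (P k x u mu2 nu2) <= L_P * (l1dist mu1 mu2 + l1dist nu1 nu2)) ->
  (forall t k x mu, is_pdist mu -> is_pdist (pi t k x mu)) ->
  is_pdist init ->
  forall t : nat,
    expect_t P pi init t
      (fun xs us =>
         `| (Npop N)%:R^-1 * \sum_(a : agent N) r (tag a) (xs a) (us a) (emp_mu R xs) (emp_nu R us)
            - \sum_(k < K) rMF r (pi t) (emp_mu R xs) k |)
    <= (M_R + L_R) * Num.sqrt (#|U|%:R) * (Npop N)%:R^-1 * \sum_(k < K) Num.sqrt ((N k)%:R).
Proof.
move=> K0 Npos MR LR LP rM rL Ppd PL pipd initpd t.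
case: (posnP #|U|) => [c0|U0].
  rewrite c0 sqrtr0 mulr0 mul0r mul0r /expect_t big1 // => xs _.
  rewrite big1 // => us _; exfalso.
  pose a0 : agent N := Tagged (fun k => 'I_(N k)) (Ordinal (Npos (Ordinal K0))).
  by move: (card0_eq c0 (us a0)); rewrite inE.
have [L0 L1] := state_law_pdist Npos K0 Ppd pipd initpd t.
rewrite /expect_t.
apply: le_trans (_ : \sum_(xs : {ffun agent N -> X}) state_law P pi init t xs *
   ((M_R + L_R) * Num.sqrt (#|U|%:R) * (Npop N)%:R^-1 * \sum_(k < K) Num.sqrt ((N k)%:R))
   <= _).
  apply: ler_sum => xs _.
  under eq_bigr do rewrite -mulrA.
  rewrite -mulr_sumr; apply: ler_wpM2l => //.
  apply: (cond_bound Npos K0 U0 (ltW MR) (ltW LR) rM rL (pipd t)).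
by rewrite -mulr_suml L1 mul1r.
Qed.
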